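(* Let $k\geq 0$ be an integer, $\xi=\pi/(3(k+4))$, and $P^k_+=\{(\lambda_1,\lambda_2)\in\mathbb{Z}^2:\lambda_1,\lambda_2\geq 0,\ \lambda_1+2\lambda_2\leq k\}$. For $\lambda,\mu\in P^k_+$ put $\hat\lambda_i=\lambda_i+1$, $\hat\mu_i=\mu_i+1$, $a=\hat\lambda_1+\hat\lambda_2$, $b=\hat\mu_1+\hat\mu_2$, and $$S_{\lambda,\mu}=\frac{-2}{(k+4)\sqrt3}\Big[\cos(2\xi(2ab+a\hat\mu_2+\hat\lambda_2 b+2\hat\lambda_2\hat\mu_2))+\cos(2\xi(-ab-2a\hat\mu_2+\hat\lambda_2 b-\hat\lambda_2\hat\mu_2))+\cos(2\xi(-ab+a\hat\mu_2-2\hat\lambda_2 b-\hat\lambda_2\hat\mu_2))-\cos(2\xi(-ab-2a\hat\mu_2-2\hat\lambda_2 b-\hat\lambda_2\hat\mu_2))-\cos(2\xi(2ab+a\hat\mu_2+\hat\lambda_2 b-\hat\lambda_2\hat\mu_2))-\cos(2\xi(-ab+a\hat\mu_2+\hat\lambda_2 b+2\hat\lambda_2\hat\mu_2))\Big].$$ For $j=1,2$ let $A_j$ be the matrix on $\ell^2(P^k_+)$ with entries $(A_j)_{\lambda,\mu}=\sum_{\sigma\in P^k_+} S_{\rho_j,\sigma}S_{\lambda,\sigma}S_{\mu,\sigma}/S_{0,\sigma}$, where $\rho_1=(1,0)$, $\rho_2=(0,1)$, $0=(0,0)$ (these are the adjacency matrices of the graphs $\mathcal{A}^{\rho_j}_k(G_2)$,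 the level-$k$ fusion graphs of $G_2$ for its two fundamental representations). Let $e_0$ be the basis vector at $(0,0)$. Then for all integers $m,n\geq 0$, $$\langle A_1^m A_2^n e_0, e_0\rangle=\frac{1}{192\pi^4}\int_{\mathbb{T}^2}\chi_1(\omega)^m\chi_2(\omega)^n\,J(\omega)^2\,\mathrm{d}^{(k+4)}(\omega),$$ i.e. the joint spectral measure of $\mathcal{A}^{\rho_1}_k(G_2),\mathcal{A}^{\rho_2}_k(G_2)$ over $\mathbb{T}^2$ is $\frac{1}{192\pi^4}J^2\,\mathrm{d}^{(k+4)}$, where $\mathrm{d}^{(k+4)}$ is the uniform probability measure on $$F_k^W=\{(e^{2\pi i q_1/3(k+4)},e^{2\pi i q_2/3(k+4)}) : q_1,q_2\in\{0,1,\ldots,3k+11\},\ q_1+q_2\equiv 0 \bmod 3\}.$$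
   Context: For $\omega=(e^{2\pi i\theta_1},e^{2\pi i\theta_2})\in\mathbb{T}^2$: $\chi_1(\omega)=1+2\cos(2\pi\theta_1)+2\cos(2\pi\theta_2)+2\cos(2\pi(\theta_1-\theta_2))$, $\chi_2(\omega)=\chi_1(\omega)+1+2\cos(2\pi(\theta_1+\theta_2))+2\cos(2\pi(2\theta_1-\theta_2))+2\cos(2\pi(\theta_1-2\theta_2))$ (characters of the 7- and 14-dimensional fundamental representations of $G_2$ restricted to the maximal torus), and $J(\omega)=8\pi^2\big(\cos(2\pi(2\theta_1+\theta_2))+\cos(2\pi(\theta_1-3\theta_2))+\cos(2\pi(3\theta_1-2\theta_2))-\cos(2\pi(\theta_1+2\theta_2))-\cos(2\pi(3\theta_1-\theta_2))-\cos(2\pi(2\theta_1-3\theta_2))\big)$. The matrix $S$ is the modular $S$-matrix of $G_2$ at level $k$ (real, symmetric, orthogonal), and $A_j$ is given by the Verlinde formula. *)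

(* Defs.v *)
From HB Require Import structures.
From mathcomp Require Import all_boot all_order all_algebra.
From mathcomp Require Import reals trigo.
Unset Printing Implicit Defensive.
Import Order.TTheory GRing.Theory Num.Theory.
Local Open Scope ring_scope.

Definition Pk (k : nat) := {x : 'I_k.+1 * 'I_k.+1 | (x.1 + 2 * x.2 <= k)%N}.

Definition Pk0 (k : nat) : Pk k := exist _ (ord0, ord0) isT.

Section G2.
Variable R : realType.

Definition xi (k : nat) : R := pi / (3 * (k + 4)%:R).

Definition Sent (k : nat) (l1 l2 m1 m2 : nat) : R :=
  let a : int := (l1 + l2 + 2)%:Z in
  let b : int := (m1 + m2 + 2)%:Z in
  let lh2 : int := (l2 + 1)%:Z in
  let mh2 : int := (m2 + 1)%:Z in
  let c (z : int) : R := cos (2 * xi k * z%:~R) in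
  (-2) / ((k + 4)%:R * Num.sqrt 3) *
  ( c (2 * a * b + a * mh2 + lh2 * b + 2 * lh2 * mh2)
  + c (- (a * b) - 2 * a * mh2 + lh2 * b - lh2 * mh2)
  + c (- (a * b) + a * mh2 - 2 * lh2 * b - lh2 * mh2)
  - c (- (a * b) - 2 * a * mh2 - 2 * lh2 * b - lh2 * mh2)
  - c (2 * a * b + a * mh2 + lh2 * b - lh2 * mh2)
  - c (- (a * b) + a * mh2 + lh2 * b + 2 * lh2 * mh2)).

Definition S (k : nat) (l m : Pk k) : R :=
  Sent k (val l).1 (val l).2 (val m).1 (val m).2.

Definition Amat (k : nat) (r1 r2 : nat) (l m : Pk k) : R :=
  \sum_(s : Pk k)
    Sent k r1 r2 (val s).1 (val s).2 * S k l s * S k m s / Sent k 0 0 (val s).1 (val s).2.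

Definition A1 (k : nat) := Amat k 1 0.
Definition A2 (k : nat) := Amat k 0 1.

Definition mapply (k : nat) (A : Pk k -> Pk k -> R) (v : Pk k -> R) : Pk k -> R :=
  fun l => \sum_(s : Pk k) A l s * v s.

Definition e0 (k : nat) : Pk k -> R := fun l => if l == Pk0 k then 1 else 0.

Definition moment (k m n : nat) : R :=
  iter m (mapply k (A1 k)) (iter n (mapply k (A2 k)) (e0 k)) (Pk0 k).

(* functions on T^2, parametrized by omega = (e^{2 pi i t1}, e^{2 pi i t2}) *)
Definition chi1 (t1 t2 : R) : R :=
  1 + 2 * cos (2 * pi * t1) + 2 * cos (2 * pi * t2) + 2 * cos (2 * pi * (t1 - t2)).

Definition chi2 (t1 t2 : R) : R :=
  chi1 t1 t2 + 1 + 2 * cos (2 * pi * (t1 + t2)) + 2 * cos (2 * pi * (2 * t1 - t2))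
  + 2 * cos (2 * pi * (t1 - 2 * t2)).

Definition J (t1 t2 : R) : R :=
  8 * pi ^+ 2 *
  ( cos (2 * pi * (2 * t1 + t2)) + cos (2 * pi * (t1 - 3 * t2))
  + cos (2 * pi * (3 * t1 - 2 * t2)) - cos (2 * pi * (t1 + 2 * t2))
  - cos (2 * pi * (3 * t1 - t2)) - cos (2 * pi * (2 * t1 - 3 * t2))).

(* F_k^W indexed by (q1,q2) in {0,...,3k+11}^2 with q1 + q2 = 0 mod 3;
   these index distinct points of T^2. *)
Definition FkW_pred (k : nat) (q : 'I_(3 * (k + 4)) * 'I_(3 * (k + 4))) : bool :=
  ((q.1 + q.2) %% 3 == 0)%N.

Definition dk_integral (k : nat) (f : R -> R -> R) : R :=
  (\sum_(q : 'I_(3 * (k + 4)) * 'I_(3 * (k + 4)) | FkW_pred k q)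
      f ((q.1)%:R / (3 * (k + 4))%:R) ((q.2)%:R / (3 * (k + 4))%:R))
  / (#|[set q : 'I_(3 * (k + 4)) * 'I_(3 * (k + 4)) | FkW_pred k q]|)%:R.

End G2.

Arguments chi1 {R}. Arguments chi2 {R}. Arguments J {R}.
Arguments dk_integral {R}. Arguments moment {R}.

(* Main.v *)
Require Import Defs.
From HB Require Import structures.
From mathcomp Require Import all_boot all_order all_algebra.
From mathcomp Require Import reals trigo.
From mathcomp Require Import ring lra zify.
Set Implicit Arguments. Unset Strict Implicit. Unset Printing Implicit Defensive.
Import Order.TTheory GRing.Theory Num.Theory.
Local Open Scope ring_scope.

Section Trig.
Variable R : realType.

Lemma cos_addZ (x : R) (z : int) : cos (x + pi *+ 2 * z%:~R) = cos x.
Proof.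
case: z => n.
  by rewrite -pmulrn mulr_natr (periodicn (@cosD2pi R)).
rewrite NegzE mulrNz mulrN -pmulrn mulr_natr.
by rewrite -{2}[x](subrK ((pi *+ 2) *+ n.+1)) (periodicn (@cosD2pi R)).
Qed.

Lemma sin_addZ (x : R) (z : int) : sin (x + pi *+ 2 * z%:~R) = sin x.
Proof.
case: z => n.
  by rewrite -pmulrn mulr_natr (periodicn (@sinD2pi R)).
rewrite NegzE mulrNz mulrN -pmulrn mulr_natr.
by rewrite -{2}[x](subrK ((pi *+ 2) *+ n.+1)) (periodicn (@sinD2pi R)).
Qed.

End Trig.

Section Geo.
Variable R : realType.

Lemma sinpiZ_ne0 (y : R) (q : int) : sin y != 0 -> sin (y + pi * q%:~R) != 0.
Proof.
move=> hy; rewrite (divz_eq q 2).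
have h0 : (0 <= (q %% 2)%Z) by rewrite modz_ge0.
have h1 : ((q %% 2)%Z < 2) by rewrite ltz_pmod.
have [->|->] : (q %% 2)%Z = 0 \/ (q %% 2)%Z = 1 by lia.
  have -> : y + pi * ((q %/ 2)%Z * 2 + 0)%:~R = y + pi *+ 2 * ((q %/ 2)%Z)%:~R.
    by rewrite rmorphD rmorphM /=; ring.
  by rewrite sin_addZ.
have -> : y + pi * ((q %/ 2)%Z * 2 + 1)%:~R = (y + pi) + pi *+ 2 * ((q %/ 2)%Z)%:~R.
  by rewrite rmorphD rmorphM /=; ring.
by rewrite sin_addZ sinDpi oppr_eq0.
Qed.

Lemma cos_geo (n : nat) (a : int) (th : R) : (0 < n)%N -> (a %% n%:Z)%Z != 0 ->
  \sum_(j < n) cos (th + pi *+ 2 * a%:~R * j%:R / n%:R) = 0.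
Proof.
move=> n0 ha.
pose h : R := pi * a%:~R / n%:R.
have hn : (n%:R : R) != 0 by rewrite pnatr_eq0 -lt0n.
have key : forall j : nat, (sin h *+ 2) * cos (th + pi *+ 2 * a%:~R * j%:R / n%:R)
     = sin (th + h * (j.+1)%:R *+ 2 - h) - sin (th + h * j%:R *+ 2 - h).
  move=> j.
  have -> : th + h * (j.+1)%:R *+ 2 - h = (th + pi *+ 2 * a%:~R * j%:R / n%:R) + h.
    by rewrite /h -natr1; field.
  have -> : th + h * j%:R *+ 2 - h = (th + pi *+ 2 * a%:~R * j%:R / n%:R) - h.
    by rewrite /h; field.
  rewrite sinD sinB; ring.
have hsin : sin h != 0.
  have hq := divz_eq a n%:Z.
  set q := (a %/ n%:Z)%Z in hq; set r := (a %% n%:Z)%Z in hq ha.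
  have r0 : 0 <= r by rewrite /r; apply: modz_ge0; lia.
  have r1 : r < n%:Z by rewrite /r ltz_pmod // ltz_nat.
  have -> : h = pi * r%:~R / n%:R + pi * q%:~R.
    by rewrite /h {1}hq rmorphD rmorphM /=; field.
  apply: sinpiZ_ne0; rewrite gt_eqF //; apply: sin_gt0_pi; apply/andP; split.
    rewrite divr_gt0 ?ltr0n // mulr_gt0 ?pi_gt0 // ltr0z lt_neqAle eq_sym ha r0 //.
  rewrite ltr_pdivrMr ?ltr0n // ltr_pM2l ?pi_gt0 //.
  by rewrite (_ : (n%:R : R) = (n%:Z)%:~R) // ltr_int.
suff: sin h *+ 2 * (\sum_(j < n) cos (th + pi *+ 2 * a%:~R * j%:R / n%:R)) = 0.
  by move/eqP; rewrite mulf_eq0 mulrn_eq0 /= (negbTE hsin) /= => /eqP.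
rewrite mulr_sumr.
rewrite (eq_bigr (fun j : 'I_n => sin (th + h * (j.+1)%:R *+ 2 - h) - sin (th + h * j%:R *+ 2 - h))); last first.
  by move=> j _; rewrite key.
rewrite -(big_mkord xpredT (fun j => sin (th + h * (j.+1)%:R *+ 2 - h) - sin (th + h * j%:R *+ 2 - h))) /=.
rewrite (telescope_sumr (fun j => sin (th + h * j%:R *+ 2 - h))) //.
have -> : th + h * n%:R *+ 2 - h = (th + h * 0%:R *+ 2 - h) + pi *+ 2 * a%:~R.
  by rewrite /h; field.
by rewrite sin_addZ subrr.
Qed.

Lemma cos_geo_dvd (n : nat) (q : int) (th : R) : (0 < n)%N ->
  \sum_(j < n) cos (th + pi *+ 2 * (q * n%:Z)%:~R * j%:R / n%:R) = n%:R * cos th.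
Proof.
move=> n0.
have hn : (n%:R : R) != 0 by rewrite pnatr_eq0 -lt0n.
rewrite (eq_bigr (fun _ => cos th)) ?sumr_const ?card_ord ?mulr_natl //.
move=> j _.
have -> : th + pi *+ 2 * (q * n%:Z)%:~R * j%:R / n%:R = th + pi *+ 2 * (q * j%:Z)%:~R.
  by rewrite !rmorphM /=; field.
by rewrite cos_addZ.
Qed.

End Geo.

Definition form := seq int.
Definition term := (int * form)%type.

Definition ev (f : form) (y x : int * int) : int :=
  f`_0 * y.1 * x.1 + f`_1 * y.1 * x.2 + f`_2 * y.2 * x.1 + f`_3 * y.2 * x.2
  + f`_4 * x.1 + f`_5 * x.2.

Definition fadd (f g : form) : form :=
  [:: f`_0 + g`_0; f`_1 + g`_1; f`_2 + g`_2; f`_3 + g`_3; f`_4 + g`_4; f`_5 + g`_5].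
Definition fneg (f : form) : form :=
  [:: - f`_0; - f`_1; - f`_2; - f`_3; - f`_4; - f`_5].

Lemma ev_add f g y x : ev (fadd f g) y x = ev f y x + ev g y x.
Proof. rewrite /ev /fadd /=; ring. Qed.
Lemma ev_neg f y x : ev (fneg f) y x = - ev f y x.
Proof. rewrite /ev /fneg /=; ring. Qed.

Definition mapp (M : int * int * int * int) (x : int * int) : int * int :=
  let: (a, b, c, d) := M in (a * x.1 + b * x.2, c * x.1 + d * x.2).
Definition substf (M : int * int * int * int) (f : form) : form :=
  let: (a, b, c, d) := M in
  [:: f`_0 * a + f`_1 * c; f`_0 * b + f`_1 * d; f`_2 * a + f`_3 * c;
      f`_2 * b + f`_3 * d; f`_4 * a + f`_5 * c; f`_4 * b + f`_5 * d].
Lemma ev_subst M f y x : ev f y (mapp M x) = ev (substf M f) y x.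
Proof. case: M => [[[a b] c] d]; rewrite /ev /substf /mapp /=; ring. Qed.

Definition specf (y0 : int * int) (f : form) : form :=
  [:: 0; 0; 0; 0; f`_4 + f`_0 * y0.1 + f`_2 * y0.2; f`_5 + f`_1 * y0.1 + f`_3 * y0.2].
Lemma ev_spec y0 f y x : ev f y0 x = ev (specf y0 f) y x.
Proof. rewrite /ev /specf /=; ring. Qed.

Definition swapf (f : form) : form := [:: f`_0; f`_2; f`_1; f`_3; 0; 0].
Lemma ev_swap f y x : f`_4 = 0 -> f`_5 = 0 -> ev f y x = ev (swapf f) x y.
Proof. move=> h4 h5; rewrite /ev /swapf /= h4 h5; ring. Qed.

Fixpoint leadneg (f : form) : bool :=
  if f is z :: f' then (if z == 0 then leadneg f' else z < 0) else false.
Definition normf (f : form) : form := if leadneg f then fneg f else f.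

Fixpoint coefsum (f : form) (L : seq term) : int :=
  if L is u :: L' then (if normf u.2 == f then u.1 + coefsum f L' else coefsum f L') else 0.

Fixpoint chk (n : nat) (L : seq term) : bool :=
  match n with
  | 0%N => nilp L
  | n'.+1 => match L with
             | [::] => true
             | t :: L' => ((t.1 + coefsum (normf t.2) L') == 0)
                          && chk n' [seq u <- L' | normf u.2 != normf t.2]
             end
  end.

Definition chkL (L : seq term) := chk (size L) L.

Definition scaleL (c : int) (L : seq term) : seq term := [seq (c * t.1, t.2) | t <- L].

Fixpoint prod1 (t : term) (L : seq term) : seq term :=
  if L is u :: L' then (t.1 * u.1, fadd t.2 u.2) :: (t.1 * u.1, fadd t.2 (fneg u.2)) :: prod1 t L'
  else [::].
Fixpoint prodL (L1 L2 : seq term) : seq term :=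
  if L1 is t :: L1' then prod1 t L2 ++ prodL L1' L2 else [::].

Definition mapL (g : form -> form) (L : seq term) : seq term := [seq (t.1, g t.2) | t <- L].

Section Ecos.
Variable R : realType.
Variable k : nat.

Definition KK : nat := (k + 4)%N.
Definition NN : nat := (3 * KK)%N.

Definition Ecos (z : int) : R := cos (2 * xi R k * z%:~R).

Lemma KK_neq0 : (KK%:R : R) != 0. Proof. by rewrite pnatr_eq0 /KK addn4. Qed.

Lemma xiE : 2 * xi R k = pi *+ 2 / NN%:R.
Proof.
rewrite /xi /NN natrM /KK -mulr_natl.
have h : ((k + 4)%:R : R) != 0 by rewrite pnatr_eq0 addn4.
by field; rewrite -natrD.
Qed.

Lemma E_opp z : Ecos (- z) = Ecos z.
Proof. by rewrite /Ecos rmorphN mulrN cosN. Qed.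

Lemma E0 : Ecos 0 = 1.
Proof. by rewrite /Ecos mulr0 cos0. Qed.

Lemma E_per z j : Ecos (z + NN%:Z * j) = Ecos z.
Proof.
rewrite /Ecos rmorphD mulrDr xiE.
have hN : (NN%:R : R) != 0 by rewrite /NN natrM mulf_neq0 ?KK_neq0 // pnatr_eq0.
have -> : pi *+ 2 / NN%:R * (NN%:Z * j)%:~R = pi *+ 2 * j%:~R :> R.
  by rewrite rmorphM /=; field.
by rewrite cos_addZ.
Qed.

Lemma E_mod z z' : (z == z' %[mod NN%:Z])%Z -> Ecos z = Ecos z'.
Proof.
rewrite eqz_mod_dvd => /dvdzP [q hq].
by rewrite -[z](subrK z') hq addrC mulrC E_per.
Qed.

Lemma E_prod a b : 2 * Ecos a * Ecos b = Ecos (a + b) + Ecos (a - b).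
Proof. rewrite /Ecos !rmorphD !rmorphN /= !mulrDr !mulrN cosD cosB; ring. Qed.

Lemma E_normf f y x : Ecos (ev (normf f) y x) = Ecos (ev f y x).
Proof. by rewrite /normf; case: leadneg => //; rewrite ev_neg E_opp. Qed.

Definition sumE (L : seq term) (y x : int * int) : R :=
  \sum_(t <- L) t.1%:~R * Ecos (ev t.2 y x).

Lemma sumE_nil y x : sumE [::] y x = 0.
Proof. by rewrite /sumE big_nil. Qed.
Lemma sumE_cons t L y x : sumE (t :: L) y x = t.1%:~R * Ecos (ev t.2 y x) + sumE L y x.
Proof. by rewrite /sumE big_cons. Qed.
Lemma sumE_cat L1 L2 y x : sumE (L1 ++ L2) y x = sumE L1 y x + sumE L2 y x.
Proof. by rewrite /sumE big_cat. Qed.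
Lemma sumE_scale c L y x : sumE (scaleL c L) y x = c%:~R * sumE L y x.
Proof.
rewrite /sumE big_map mulr_sumr; apply: eq_bigr => t _.
by rewrite rmorphM /= mulrA.
Qed.

Lemma coefsumE f L y x :
  \sum_(u <- L | normf u.2 == f) u.1%:~R * Ecos (ev u.2 y x) = (coefsum f L)%:~R * Ecos (ev f y x).
Proof.
elim: L => [|u L IH] /=; first by rewrite big_nil mul0r.
rewrite big_cons; case: eqP => [hf|_]; last exact: IH.
by rewrite IH rmorphD mulrDl -hf E_normf.
Qed.

Lemma chk_sound n L y x : (size L <= n)%N -> chk n L -> sumE L y x = 0.
Proof.
elim: n L => [|n IH] [|t L] //=; try by rewrite sumE_nil.
move=> hs /andP [/eqP h0 hc].
rewrite sumE_cons /sumE (bigID (fun u : term => normf u.2 == normf t.2)) /= coefsumE.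
have -> : \sum_(u <- L | normf u.2 != normf t.2) u.1%:~R * Ecos (ev u.2 y x)
   = sumE [seq u <- L | normf u.2 != normf t.2] y x by rewrite /sumE big_filter.
rewrite (IH _ _ hc); last first.
  by rewrite size_filter (leq_trans (count_size _ _)).
rewrite addr0 -(E_normf t.2) -mulrDl -rmorphD /= h0 mul0r //.
Qed.

Lemma chkL_sound L y x : chkL L -> sumE L y x = 0.
Proof. exact: chk_sound. Qed.

Lemma sumE_eq L1 L2 y x : chkL (L1 ++ scaleL (-1) L2) -> sumE L1 y x = sumE L2 y x.
Proof.
move/chkL_sound => /(_ y x); rewrite sumE_cat sumE_scale => /eqP.
by rewrite rmorphN1 mulN1r subr_eq0 => /eqP.
Qed.

Lemma prod1E t L y x :
  2 * (t.1%:~R * Ecos (ev t.2 y x)) * sumE L y x = sumE (prod1 t L) y x.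
Proof.
elim: L => [|u L IH] /=; first by rewrite !sumE_nil mulr0.
rewrite !sumE_cons /= -IH !ev_add ev_neg !rmorphM /=.
set p := ev t.2 y x; set q := ev u.2 y x.
have h' : Ecos (p + q) = 2 * Ecos p * Ecos q - Ecos (p - q) by rewrite E_prod; ring.
rewrite h'; ring.
Qed.

Lemma prodLE L1 L2 y x : 2 * sumE L1 y x * sumE L2 y x = sumE (prodL L1 L2) y x.
Proof.
elim: L1 => [|t L1 IH] /=; first by rewrite !sumE_nil mulr0 mul0r.
rewrite sumE_cat -IH -prod1E sumE_cons; ring.
Qed.

Lemma sumE_map (g : form -> form) L y x y' x' :
  (forall f, ev (g f) y x = ev f y' x') -> sumE (mapL g L) y x = sumE L y' x'.
Proof.
move=> h; rewrite /sumE big_map; apply: eq_bigr => t _ /=; by rewrite h.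
Qed.

End Ecos.

Definition Wlist : seq (int * int * int * int) :=
  [:: (1, 0, 0, 1); (-1, 0, 1, 1); (1, 3, 0, -1); (2, 3, -1, -1); (-1, -3, 1, 2); (-2, -3, 1, 2);
      (2, 3, -1, -2); (1, 3, -1, -2); (-2, -3, 1, 1); (-1, -3, 0, 1); (1, 0, -1, -1); (-1, 0, 0, -1)].
Definition Wm (i : nat) := nth (1, 0, 0, 1) Wlist i.
Definition detM (M : int * int * int * int) : int := let: (a, b, c, d) := M in a * d - b * c.
Definition Winv (M : int * int * int * int) :=
  let: (a, b, c, d) := M in let e := a * d - b * c in (e * d, - e * b, - e * c, e * a).

Definition cone (x : int * int) : nat :=
  (if 0 < 0 * x.1 + 1 * x.2 then (if 0 < 1 * x.1 + 1 * x.2 then (if 0 < 1 * x.1 + 2 * x.2 then (if 0 < 1 * x.1 + 0 * x.2 then 0%N else 1%N) else 0%N) else (if 0 < 1 * x.1 + 2 * x.2 then (if 0 < 1 * x.1 + 0 * x.2 then 0%N else (if 0 < 1 * x.1 + 3 * x.2 then (if 0 < 2 * x.1 + 3 * x.2 then 4%N else 5%N) else 0%N)) else (if 0 < 1 * x.1 + 0 * x.2 then 0%N else (if 0 < 1 * x.1 + 3 * x.2 then 8%N else 9%N)))) else (if 0 < 1 * x.1 + 1 * x.2 then (if 0 < 1 * x.1 + 2 * x.2 then (if 0 < 1 * x.1 + 0 * x.2 then (if 0 < 1 * x.1 + 3 * x.2 then 2%N else 3%N) else 0%N) else (if 0 < 1 * x.1 + 0 * x.2 then (if 0 < 1 * x.1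 + 3 * x.2 then 0%N else (if 0 < 2 * x.1 + 3 * x.2 then 6%N else 7%N)) else 0%N)) else (if 0 < 1 * x.1 + 2 * x.2 then 0%N else (if 0 < 1 * x.1 + 0 * x.2 then 10%N else 11%N)))).

Lemma cone_dom x : (cone x < 12)%N /\ 0 <= (mapp (Winv (Wm (cone x))) x).1
   /\ 0 <= (mapp (Winv (Wm (cone x))) x).2.
Proof.
case: x => x1 x2; rewrite /cone /=.
repeat case: ifP => ? /=; lia.
Qed.

Lemma cone_W i z : (i < 12)%N -> 0 < z.1 -> 0 < z.2 -> cone (mapp (Wm i) z) = i.
Proof.
case: z => z1 z2 /=.
do 12! (case: i => [|i]; first by move=> _ h1 h2; rewrite /cone /=; repeat case: ifP => ? /=; lia).
by [].
Qed.

Lemma W_Winv i x : (i < 12)%N -> mapp (Wm i) (mapp (Winv (Wm i)) x) = x.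
Proof.
case: x => x1 x2.
do 12! (case: i => [|i]; first by move=> _; rewrite /mapp /=; congr pair; ring).
by [].
Qed.

Lemma Winv_W i x : (i < 12)%N -> mapp (Winv (Wm i)) (mapp (Wm i) x) = x.
Proof.
case: x => x1 x2.
do 12! (case: i => [|i]; first by move=> _; rewrite /mapp /=; congr pair; ring).
by [].
Qed.

Section Geom.
Variable K : int.
Hypothesis K0 : 0 < K.

Definition inH (x : int * int) :=
  [/\ - K <= x.2 <= K, - K <= x.1 + x.2 <= K & - K <= x.1 + 2 * x.2 <= K].
Definition inHo (x : int * int) :=
  [/\ - K < x.2 < K, - K < x.1 + x.2 < K & - K < x.1 + 2 * x.2 < K].
Definition alc (z : int * int) := [/\ 1 <= z.1, 1 <= z.2 & z.1 + 2 * z.2 <= K - 1].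

Lemma inH_Winv i x : (i < 12)%N -> inH x -> inH (mapp (Winv (Wm i)) x).
Proof.
case: x => x1 x2; rewrite /inH /=.
do 12! (case: i => [|i]; first by move=> _ [/andP[? ?] /andP[? ?] /andP[? ?]]; rewrite /mapp /=;
   split; apply/andP; split; lia).
by [].
Qed.

Lemma alc_inHo i z : (i < 12)%N -> alc z -> inHo (mapp (Wm i) z).
Proof.
case: z => z1 z2; rewrite /alc /inHo /=.
do 12! (case: i => [|i]; first by move=> _ [? ? ?]; rewrite /mapp /=;
   split; apply/andP; split; lia).
by [].
Qed.

Lemma small_mul (v : int) : - (K * 2) < K * v < K * 2 -> -1 <= v <= 1.
Proof. move=> /andP [h1 h2]; apply/andP; split; nia. Qed.

Lemma inHo_diff y y' u v : inHo y -> inHo y' -> y = (y'.1 + 3 * K * u, y'.2 + K * v) -> u = 0 /\ v = 0.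
Proof.
case: y => y1 y2; case: y' => z1 z2; rewrite /inHo /= => [[/andP[a1 a2] /andP[b1 b2] /andP[c1 c2]]]
  [/andP[d1 d2] /andP[e1 e2] /andP[f1 f2]] [h1 h2].
have hv : -1 <= v <= 1 by apply: small_mul; apply/andP; split; nia.
have hw : -1 <= 3 * u + v <= 1.
  by apply: small_mul; apply/andP; split; nia.
have hx : -1 <= 3 * u + 2 * v <= 1.
  by apply: small_mul; apply/andP; split; nia.
lia.
Qed.

Lemma hexred x : exists u v, inH (x.1 - 3 * K * u, x.2 - K * v).
Proof.
case: x => x1 x2 /=.
have Kn : K != 0 by rewrite gt_eqF.
have ha := divz_eq x2 K; have hb := divz_eq (x1 + x2) K.
set i := (x2 %/ K)%Z in ha *; set r := (x2 %% K)%Z in ha *.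
set j := ((x1 + x2) %/ K)%Z in hb *; set s := ((x1 + x2) %% K)%Z in hb *.
have hc := divz_eq (j - i) 3.
set m := ((j - i) %/ 3)%Z in hc *; set c := ((j - i) %% 3)%Z in hc *.
have r0 : 0 <= r by rewrite modz_ge0.
have r1 : r < K by rewrite ltz_pmod.
have s0 : 0 <= s by rewrite modz_ge0.
have s1 : s < K by rewrite ltz_pmod.
have c0 : 0 <= c by rewrite modz_ge0.
have c1 : c < 3 by rewrite ltz_pmod.
have hj : j = i + 3 * m + c by lia.
have [hc0|[hc1|hc2]] : c = 0 \/ c = 1 \/ c = 2 by lia.
- case: (leP (r + s) K) => hrs.
  + exists m, i; rewrite /inH /=.
    have e1 : x2 - K * i = r by lia.
    have e2 : x1 - 3 * K * m + (x2 - K * i) = s by nia.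
    split; apply/andP; split; nia.
  + exists m, (i + 1); rewrite /inH /=.
    have e1 : x2 - K * (i + 1) = r - K by nia.
    have e2 : x1 - 3 * K * m + (x2 - K * (i + 1)) = s - K by nia.
    split; apply/andP; split; nia.
- exists m, (i + 1); rewrite /inH /=.
  have e1 : x2 - K * (i + 1) = r - K by nia.
  have e2 : x1 - 3 * K * m + (x2 - K * (i + 1)) = s by nia.
  split; apply/andP; split; nia.
- exists (m + 1), i; rewrite /inH /=.
  have e1 : x2 - K * i = r by nia.
  have e2 : x1 - 3 * K * (m + 1) + (x2 - K * i) = s - K by nia.
  split; apply/andP; split; nia.
Qed.

Definition congT (y y' : int * int) := exists u v, y = (y'.1 + 3 * K * u, y'.2 + K * v).

Lemma fold_point x : exists i z, [/\ (i < 12)%N, inH z, 0 <= z.1, 0 <= z.2 & congT x (mapp (Wm i) z)].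
Proof.
have [u [v hH]] := hexred x.
set x' := (x.1 - 3 * K * u, x.2 - K * v) in hH.
have [hi [d1 d2]] := cone_dom x'.
exists (cone x'), (mapp (Winv (Wm (cone x'))) x'); split => //.
  exact: inH_Winv.
rewrite W_Winv //; exists u, v; rewrite /x' /= !subrK; by case: (x).
Qed.

Lemma inj_point i j z z' : (i < 12)%N -> (j < 12)%N -> alc z -> alc z' ->
  congT (mapp (Wm i) z) (mapp (Wm j) z') -> i = j /\ z = z'.
Proof.
move=> hi hj hz hz' [u [v he]].
have [u0 v0] := inHo_diff (alc_inHo hi hz) (alc_inHo hj hz') he.
have he' : mapp (Wm i) z = mapp (Wm j) z'.
  by rewrite he u0 v0 !mulr0 !addr0; case: (mapp (Wm j) z').
have eij : i = j.
  case: hz => h1 h2 _; case: hz' => h1' h2' _.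
  have c1 : cone (mapp (Wm i) z) = i by apply: cone_W => //; lia.
  have c2 : cone (mapp (Wm j) z') = j by apply: cone_W => //; lia.
  by rewrite -c1 -c2 he'.
split => //; subst j.
by rewrite -(Winv_W z hi) he' Winv_W.
Qed.

End Geom.

Definition lin (a b : int) : form := [:: 0; 0; 0; 0; a; b].
Definition BrL : seq term :=
  [:: (1, [:: 2; 3; 3; 6; 0; 0]); (1, [:: -1; -3; 0; -3; 0; 0]); (1, [:: -1; 0; -3; -3; 0; 0]);
      (-1, [:: -1; -3; -3; -6; 0; 0]); (-1, [:: 2; 3; 3; 3; 0; 0]); (-1, [:: -1; 0; 0; 3; 0; 0])].
Definition Chi1L : seq term := [:: (1, lin 0 0); (2, lin 2 3); (2, lin 1 3); (2, lin 1 0)].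
Definition Chi2L : seq term := Chi1L ++ [:: (1, lin 0 0); (2, lin 3 6); (2, lin 3 3); (2, lin 0 (-3))].

Definition Kz (k : nat) : int := (k + 4)%:Z.

Lemma chk_chi1 : chkL (prodL Chi1L (mapL (specf (1, 1)) BrL) ++ scaleL (-1) (scaleL 2 (mapL (specf (2, 1)) BrL))).
Proof. vm_compute. reflexivity. Qed.
Lemma chk_chi2 : chkL (prodL Chi2L (mapL (specf (1, 1)) BrL) ++ scaleL (-1) (scaleL 2 (mapL (specf (1, 2)) BrL))).
Proof. vm_compute. reflexivity. Qed.
Lemma chk_BrW : all (fun i => chkL (mapL (substf (Wm i)) BrL ++ scaleL (-1) (scaleL (detM (Wm i)) BrL))) (iota 0 12).
Proof. vm_compute. reflexivity. Qed.
Lemma chk_chi1W : all (fun i => chkL (mapL (substf (Wm i)) Chi1L ++ scaleL (-1) Chi1L)) (iota 0 12).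
Proof. vm_compute. reflexivity. Qed.
Lemma chk_chi2W : all (fun i => chkL (mapL (substf (Wm i)) Chi2L ++ scaleL (-1) Chi2L)) (iota 0 12).
Proof. vm_compute. reflexivity. Qed.
Lemma chk_sym : chkL (mapL swapf BrL ++ scaleL (-1) BrL).
Proof. vm_compute. reflexivity. Qed.
Lemma BrL_lin0 : all (fun t : term => (t.2`_4 == 0) && (t.2`_5 == 0)) BrL.
Proof. by []. Qed.
Definition per3 (t : term) := [&& (t.2`_1 %% 3 == 0)%Z, (t.2`_3 %% 3 == 0)%Z & (t.2`_5 %% 3 == 0)%Z].
Lemma per_BrL : all per3 BrL. Proof. by []. Qed.
Lemma per_Chi1L : all per3 Chi1L. Proof. by []. Qed.
Lemma per_Chi2L : all per3 Chi2L. Proof. by []. Qed.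

Section Br.
Variable R : realType.
Variable k : nat.

Definition Br (y x : int * int) : R := sumE R k BrL y x.
Definition chi1x (x : int * int) : R := sumE R k Chi1L (0, 0) x.
Definition chi2x (x : int * int) : R := sumE R k Chi2L (0, 0) x.

Lemma sumE_map_in (g : form -> form) L y x y' x' :
  (forall t, t \in L -> ev (g t.2) y x = ev t.2 y' x') -> sumE R k (mapL g L) y x = sumE R k L y' x'.
Proof.
move=> h; rewrite /sumE big_map big_seq [RHS]big_seq; apply: eq_bigr => t ht /=; by rewrite h.
Qed.

Lemma Br_sym y x : Br y x = Br x y.
Proof.
rewrite /Br -(sumE_eq _ _ _ _ chk_sym).
apply: sumE_map_in => t ht; move: (allP BrL_lin0 t ht) => /andP [/eqP h4 /eqP h5].
by rewrite -ev_swap.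
Qed.

Lemma Br_W i y x : (i < 12)%N -> Br y (mapp (Wm i) x) = (detM (Wm i))%:~R * Br y x.
Proof.
move=> hi; rewrite /Br.
have hc : chkL (mapL (substf (Wm i)) BrL ++ scaleL (-1) (scaleL (detM (Wm i)) BrL)).
  by move: chk_BrW => /allP; apply; rewrite mem_iota.
rewrite -sumE_scale -(sumE_eq _ _ _ _ hc); symmetry; apply: sumE_map => f; by rewrite ev_subst.
Qed.

Lemma chi1_W i x : (i < 12)%N -> chi1x (mapp (Wm i) x) = chi1x x.
Proof.
move=> hi; rewrite /chi1x.
have hc : chkL (mapL (substf (Wm i)) Chi1L ++ scaleL (-1) Chi1L).
  by move: chk_chi1W => /allP; apply; rewrite mem_iota.
rewrite -(sumE_eq _ _ (0, 0) x hc); symmetry; apply: sumE_map => f; by rewrite ev_subst.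
Qed.

Lemma chi2_W i x : (i < 12)%N -> chi2x (mapp (Wm i) x) = chi2x x.
Proof.
move=> hi; rewrite /chi2x.
have hc : chkL (mapL (substf (Wm i)) Chi2L ++ scaleL (-1) Chi2L).
  by move: chk_chi2W => /allP; apply; rewrite mem_iota.
rewrite -(sumE_eq _ _ (0, 0) x hc); symmetry; apply: sumE_map => f; by rewrite ev_subst.
Qed.

Lemma chi1_id x : Br (2, 1) x = chi1x x * Br (1, 1) x.
Proof.
have := sumE_eq R k (0, 0) x chk_chi1.
have e1 : sumE R k (mapL (specf (1, 1)) BrL) (0, 0) x = Br (1, 1) x.
  by apply: sumE_map => f; rewrite -ev_spec.
have e2 : sumE R k (mapL (specf (2, 1)) BrL) (0, 0) x = Br (2, 1) x.
  by apply: sumE_map => f; rewrite -ev_spec.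
rewrite -prodLE sumE_scale e1 e2 => h.
have h2 : (2 : R) != 0 by rewrite pnatr_eq0.
apply: (mulfI h2).
rewrite mulrA /chi1x /chi2x h //.
Qed.

Lemma chi2_id x : Br (1, 2) x = chi2x x * Br (1, 1) x.
Proof.
have := sumE_eq R k (0, 0) x chk_chi2.
have e1 : sumE R k (mapL (specf (1, 1)) BrL) (0, 0) x = Br (1, 1) x.
  by apply: sumE_map => f; rewrite -ev_spec.
have e2 : sumE R k (mapL (specf (1, 2)) BrL) (0, 0) x = Br (1, 2) x.
  by apply: sumE_map => f; rewrite -ev_spec.
rewrite -prodLE sumE_scale e1 e2 => h.
have h2 : (2 : R) != 0 by rewrite pnatr_eq0.
apply: (mulfI h2).
rewrite mulrA /chi1x /chi2x h //.
Qed.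

Lemma E_ev_per (f : form) y x u v : (f`_1 %% 3 == 0)%Z -> (f`_3 %% 3 == 0)%Z -> (f`_5 %% 3 == 0)%Z ->
  Ecos R k (ev f y (x.1 + 3 * Kz k * u, x.2 + Kz k * v)) = Ecos R k (ev f y x).
Proof.
move=> /eqP/dvdz_mod0P/dvdzP [q1 h1] /eqP/dvdz_mod0P/dvdzP [q3 h3] /eqP/dvdz_mod0P/dvdzP [q5 h5].
have -> : ev f y (x.1 + 3 * Kz k * u, x.2 + Kz k * v) = ev f y x + (NN k)%:Z *
   (f`_0 * y.1 * u + q1 * y.1 * v + f`_2 * y.2 * u + q3 * y.2 * v + f`_4 * u + q5 * v).
  rewrite /ev /= h1 h3 h5 /NN /KK /Kz PoszM; ring.
exact: E_per.
Qed.

Lemma sumE_per L y x u v : all per3 L ->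
  sumE R k L y (x.1 + 3 * Kz k * u, x.2 + Kz k * v) = sumE R k L y x.
Proof.
move=> /allP h; rewrite /sumE !big_seq; apply: eq_bigr => t ht.
by case/and3P: (h t ht) => *; rewrite E_ev_per.
Qed.

Lemma Br_per y x u v : Br y (x.1 + 3 * Kz k * u, x.2 + Kz k * v) = Br y x.
Proof. exact: sumE_per per_BrL. Qed.
Lemma chi1_per x u v : chi1x (x.1 + 3 * Kz k * u, x.2 + Kz k * v) = chi1x x.
Proof. exact: sumE_per per_Chi1L. Qed.
Lemma chi2_per x u v : chi2x (x.1 + 3 * Kz k * u, x.2 + Kz k * v) = chi2x x.
Proof. exact: sumE_per per_Chi2L. Qed.

End Br.

Section Unfold.
Variable R : realType.
Variable k : nat.
Local Notation K := (Kz k).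

Lemma K0 : 0 < K. Proof. by rewrite /Kz; lia. Qed.

Definition hat (s : Pk k) : int * int := (((val s).1 : nat).+1%:Z, ((val s).2 : nat).+1%:Z).
Definition bx (x : 'I_(NN k) * 'I_(KK k)) : int * int := (((x.1 : nat) : int), ((x.2 : nat) : int)).

Definition congb (x y : int * int) : bool :=
  ((x.1 - y.1) %% (3 * K) == 0)%Z && ((x.2 - y.2) %% K == 0)%Z.

Lemma congbP x y : reflect (congT K x y) (congb x y).
Proof.
apply: (iffP andP).
  case=> /eqP/dvdz_mod0P/dvdzP [u hu] /eqP/dvdz_mod0P/dvdzP [v hv].
  exists u, v; case: x y hu hv => [x1 x2] [y1 y2] /= hu hv; congr pair; nia.
case=> u [v ->] /=; split; apply/eqP/dvdz_mod0P/dvdzP.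
  by exists u; ring.
by exists v; ring.
Qed.

Lemma congT_sym x y : congT K x y -> congT K y x.
Proof.
case=> u [v ->]; exists (- u), (- v) => /=.
by case: y => y1 y2 /=; congr pair; ring.
Qed.

Lemma congT_trans x y z : congT K x y -> congT K y z -> congT K x z.
Proof.
case=> u [v ->] [u' [v' ->]]; exists (u + u'), (v + v') => /=; congr pair; ring.
Qed.

Lemma alc_hat s : alc K (hat s).
Proof.
case: s => [[a b]] /= h; rewrite /alc /hat /Kz /=; split; lia.
Qed.

Lemma hat_inj : injective hat.
Proof.
case=> [[a1 a2] h] [[b1 b2] h'] [e1 e2]; apply/val_inj => /=.
congr pair; apply/val_inj => /=; lia.
Qed.

Lemma alc_hat_ex z : alc K z -> exists s : Pk k, hat s = z.
Proof.
case: z => z1 z2; rewrite /alc /Kz /= => [[h1 h2 h3]].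
have o1 : (`|z1 - 1| < k.+1)%N by lia.
have o2 : (`|z2 - 1| < k.+1)%N by lia.
have hp : ((Ordinal o1, Ordinal o2).1 + 2 * (Ordinal o1, Ordinal o2).2 <= k)%N by rewrite /=; lia.
exists (exist _ (Ordinal o1, Ordinal o2) hp); rewrite /hat /=; congr pair; lia.
Qed.

Lemma Br_wall0 (z : int * int) : inH K z -> 0 <= z.1 -> 0 <= z.2 -> ~ alc K z ->
  forall y, Br R k y z = 0.
Proof.
case: z => z1 z2; rewrite /inH /alc /= => [[/andP[a1 a2] /andP[b1 b2] /andP[c1 c2]]] d1 d2 hn y.
have hna : ~ [/\ 1 <= z1, 1 <= z2 & z1 + 2 * z2 <= K - 1] by [].
have anti : forall i, (i < 12)%N -> detM (Wm i) = -1 -> mapp (Wm i) (z1, z2) = (z1, z2) ->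
    Br R k y (z1, z2) = 0.
  move=> i hi hd he; have := Br_W R k y (z1, z2) hi; rewrite he hd => /eqP.
  rewrite mulN1r -subr_eq0 opprK -mulr2n mulrn_eq0 /= => /eqP //.
have [e|[e|e]] : z1 = 0 \/ z2 = 0 \/ z1 + 2 * z2 = K.
  case: (lerP 1 z1) => ?; last by left; lia.
  case: (lerP 1 z2) => ?; last by right; left; lia.
  right; right; case: (eqVneq (z1 + 2 * z2) K) => // hne; exfalso; apply: hna; split => //; lia.
- by apply: (anti 1%N) => //; rewrite /mapp /= e; congr pair; ring.
- by apply: (anti 2%N) => //; rewrite /mapp /= e; congr pair; ring.
- have := Br_W R k y (z1, z2) (isT : (10 < 12)%N).
  have -> : mapp (Wm 10) (z1, z2) = ((z1, z2).1 + 3 * K * 0, (z1, z2).2 + K * (-1)).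
    by rewrite /mapp /= -e; congr pair; ring.
  rewrite Br_per /= => /eqP.
  by rewrite mulN1r -subr_eq0 opprK -mulr2n mulrn_eq0 /= => /eqP.
Qed.

Lemma fold_hat x : (forall y, Br R k y x = 0) \/ exists i : 'I_12, exists s : Pk k, congT K x (mapp (Wm i) (hat s)).
Proof.
have [i [z [hi hH h1 h2 hc]]] := fold_point K0 x.
case: (boolP [&& 1 <= z.1, 1 <= z.2 & z.1 + 2 * z.2 <= K - 1]) => /and3P ha.
  right; have [s hs] := alc_hat_ex ha.
  by exists (Ordinal hi), s; rewrite hs.
left => y; case: hc => u [v hx].
have w0 := Br_wall0 hH h1 h2 ha y.
by rewrite hx Br_per Br_W // w0 mulr0.
Qed.

Lemma inj_hat (i j : 'I_12) s s' : congT K (mapp (Wm i) (hat s)) (mapp (Wm j) (hat s')) -> i = j /\ s = s'.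
Proof.
move=> h; have [eij es] := inj_point K0 (ltn_ord i) (ltn_ord j) (alc_hat s) (alc_hat s') h.
by split; [apply: val_inj | apply: hat_inj].
Qed.

Lemma box_rep (y : int * int) : exists x0 : 'I_(NN k) * 'I_(KK k), congT K (bx x0) y.
Proof.
have hN : 0 < 3 * K by rewrite /Kz; lia.
have e1 := divz_eq y.1 (3 * K); have e2 := divz_eq y.2 K.
have a0 : 0 <= (y.1 %% (3 * K))%Z by rewrite modz_ge0 // gt_eqF.
have a1 : (y.1 %% (3 * K))%Z < 3 * K by rewrite ltz_pmod.
have b0 : 0 <= (y.2 %% K)%Z by rewrite modz_ge0 // gt_eqF // K0.
have b1 : (y.2 %% K)%Z < K by rewrite ltz_pmod // K0.
have o1 : (`|(y.1 %% (3 * K))%Z| < NN k)%N.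
  move: a0 a1; set m := (y.1 %% (3 * K))%Z; rewrite /NN /KK /Kz; lia.
have o2 : (`|(y.2 %% K)%Z| < KK k)%N.
  move: b0 b1; set m := (y.2 %% K)%Z; rewrite /KK /Kz; lia.
exists (Ordinal o1, Ordinal o2); exists (- (y.1 %/ (3 * K))%Z), (- (y.2 %/ K)%Z).
rewrite /bx /=; case: y e1 e2 {a0 a1 b0 b1 o1 o2} => y1 y2 /= e1 e2.
have -> : (`|(y1 %% (3 * K))%Z|%N : int) = (y1 %% (3 * K))%Z by rewrite gez0_abs // modz_ge0 // gt_eqF.
have -> : (`|(y2 %% K)%Z|%N : int) = (y2 %% K)%Z by rewrite gez0_abs // modz_ge0 // gt_eqF // K0.
congr pair.
  by rewrite {2}e1 mulrA; ring.
by rewrite {2}e2; ring.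
Qed.

Lemma mod_uniq (c a a' u : int) : 0 < c -> 0 <= a < c -> 0 <= a' < c -> a = a' + c * u -> u = 0.
Proof.
move=> c0 /andP[h1 h2] /andP[h3 h4] e.
case: (ltrgtP u 0) => // hu.
  have : c * u <= - c by rewrite -mulrN1 ler_pM2l //; lia.
  lia.
have : c <= c * u by rewrite -{1}(mulr1 c) ler_pM2l //; lia.
lia.
Qed.

Lemma box_uniq (x x' : 'I_(NN k) * 'I_(KK k)) : congT K (bx x) (bx x') -> x = x'.
Proof.
case: x x' => [a b] [a' b'] [u [v [h1 h2]]].
have ha := ltn_ord a; have ha' := ltn_ord a'; have hb := ltn_ord b; have hb' := ltn_ord b'.
move: ha ha' hb hb'; rewrite /NN /KK => ha ha' hb hb'.
have u0 : u = 0.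
  apply: (@mod_uniq (3 * K) a a') => //; rewrite /Kz; lia.
have v0 : v = 0.
  apply: (@mod_uniq K b b') => //; rewrite /Kz; lia.
move: h1 h2; rewrite u0 v0 !mulr0 !addr0 => h1 h2.
by move: h1 h2 => /= [/ord_inj ->] [/ord_inj ->].
Qed.

Lemma unfold (f : int * int -> R) :
  (forall x u v, f (x.1 + 3 * K * u, x.2 + K * v) = f x) ->
  (forall i x, (i < 12)%N -> f (mapp (Wm i) x) = f x) ->
  (forall x, (forall y, Br R k y x = 0) -> f x = 0) ->
  \sum_(x : 'I_(NN k) * 'I_(KK k)) f (bx x) = 12 * \sum_(s : Pk k) f (hat s).
Proof.
move=> fper fW fwall.
have fcong : forall x y, congT K x y -> f x = f y by move=> x y [u [v ->]]; rewrite fper.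
have step1 : forall x : 'I_(NN k) * 'I_(KK k), f (bx x) =
    \sum_(p : 'I_12 * Pk k) (if congb (bx x) (mapp (Wm p.1) (hat p.2)) then f (bx x) else 0).
  move=> x; case: (fold_hat (bx x)) => [hw|[i [s hc]]].
    by rewrite (fwall _ hw) big1 // => p _; case: ifP.
  rewrite (bigD1 (i, s)) //= (introT (congbP _ _) hc) big1 ?addr0 // => [[j s']] /= hne.
  case: (congbP (bx x) (mapp (Wm j) (hat s'))) => // hc'.
  have [ej es] := inj_hat (congT_trans (congT_sym hc') hc).
  by move: hne; rewrite ej es eqxx.
rewrite (eq_bigr _ (fun x _ => step1 x)) exchange_big /=.
have step3 : forall p : 'I_12 * Pk k,
    \sum_(x : 'I_(NN k) * 'I_(KK k)) (if congb (bx x) (mapp (Wm p.1) (hat p.2)) then f (bx x) else 0)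
    = f (hat p.2).
  move=> [i s] /=; have [x0 hx0] := box_rep (mapp (Wm i) (hat s)).
  rewrite (bigD1 x0) //= (introT (congbP _ _) hx0) big1 ?addr0.
    by rewrite (fcong _ _ hx0) fW.
  move=> x hne; case: (congbP (bx x) (mapp (Wm i) (hat s))) => // hc.
  by move: hne; rewrite (box_uniq (congT_trans hc (congT_sym hx0))) eqxx.
rewrite (eq_bigr _ (fun p _ => step3 p)).
rewrite -(pair_big xpredT xpredT (fun (i : 'I_12) (s : Pk k) => f (hat s))) /=.
by rewrite sumr_const card_ord mulr_natl.
Qed.

End Unfold.

Section Orth.
Variable R : realType.
Variable k : nat.
Local Notation K := (Kz k).
Local Notation E := (Ecos R k).

Lemma KKpos : (0 < KK k)%N. Proof. by rewrite /KK addn4. Qed.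
Lemma NNpos : (0 < NN k)%N. Proof. by rewrite /NN muln_gt0 KKpos. Qed.

Lemma sum_lin1 (A : int) :
  \sum_(x1 < NN k) E (A * x1%:Z) = if (A %% (NN k)%:Z == 0)%Z then (NN k)%:R else 0.
Proof.
have -> : \sum_(x1 < NN k) E (A * x1%:Z) =
    \sum_(x1 < NN k) cos (0 + pi *+ 2 * A%:~R * x1%:R / (NN k)%:R).
  apply: eq_bigr => x1 _; rewrite /Ecos add0r rmorphM /= mulrA xiE.
  by apply: congr1; rewrite (_ : ((x1 : nat)%:Z)%:~R = (x1%:R : R)) //; ring.
case: eqP => [/dvdz_mod0P/dvdzP [q ->]|/eqP hne].
  by rewrite cos_geo_dvd ?NNpos // cos0 mulr1.
by rewrite cos_geo ?NNpos.
Qed.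

Lemma boxE (A Cp : int) :
  \sum_(x : 'I_(NN k) * 'I_(KK k)) E (A * (bx x).1 + 3 * Cp * (bx x).2)
  = if ((A %% (NN k)%:Z == 0)%Z && (Cp %% K == 0)%Z) then ((NN k * KK k)%:R : R) else 0.
Proof.
rewrite -(pair_big xpredT xpredT (fun (x1 : 'I_(NN k)) (x2 : 'I_(KK k)) => E (A * x1%:Z + 3 * Cp * x2%:Z))) /=.
have inner : forall x1 : 'I_(NN k), \sum_(x2 < KK k) E (A * x1%:Z + 3 * Cp * x2%:Z)
   = if (Cp %% K == 0)%Z then (KK k)%:R * E (A * x1%:Z) else 0.
  move=> x1.
  have -> : \sum_(x2 < KK k) E (A * x1%:Z + 3 * Cp * x2%:Z) =
      \sum_(x2 < KK k) cos (2 * xi R k * (A * x1%:Z)%:~R + pi *+ 2 * Cp%:~R * x2%:R / (KK k)%:R).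
    apply: eq_bigr => x2 _; rewrite /Ecos rmorphD mulrDr; congr (cos (_ + _)).
    rewrite !rmorphM /= xiE /NN natrM.
    have h : ((KK k)%:R : R) != 0 by exact: KK_neq0.
    by field; rewrite h.
  case: eqP => [/dvdz_mod0P/dvdzP [q ->]|/eqP hne].
    by rewrite cos_geo_dvd ?KKpos.
  by rewrite cos_geo ?KKpos.
rewrite (eq_bigr _ (fun x1 _ => inner x1)).
case: (Cp %% K == 0)%Z; last by rewrite andbF big1.
rewrite andbT -mulr_sumr sum_lin1; case: ifP => _; last by rewrite mulr0.
by rewrite natrM mulrC.
Qed.

Definition Bf (z x : int * int) : int := (2 * z.1 + 3 * z.2) * x.1 + 3 * (z.1 + 2 * z.2) * x.2.
Definition BrU : seq (int * nat) := [:: (1, 0%N); (1, 7%N); (1, 8%N); (-1, 10%N); (-1, 2%N); (-1, 5%N)].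

Lemma BrE y x : Br R k y x = \sum_(t <- BrU) t.1%:~R * E (Bf (mapp (Wm t.2) y) x).
Proof.
rewrite /Br /sumE !big_cons !big_nil /=.
rewrite /ev /Bf /mapp /=.
repeat (congr (_ + _); first by congr (_ * Ecos _ _ _); ring).
Qed.

Definition condB (w : int * int) : bool :=
  ((2 * w.1 + 3 * w.2) %% (NN k)%:Z == 0)%Z && ((w.1 + 2 * w.2) %% K == 0)%Z.

Lemma condB_congT z z' : condB (z.1 - z'.1, z.2 - z'.2) = congb k z z'.
Proof.
rewrite /condB /congb /=; have hN : (NN k)%:Z = 3 * K by rewrite /NN PoszM.
rewrite hN; apply/idP/idP.
  case/andP => /eqP/dvdz_mod0P/dvdzP [p hp] /eqP/dvdz_mod0P/dvdzP [q hq].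
  apply/andP; split; apply/eqP/dvdz_mod0P/dvdzP.
    by exists (2 * p - q); move: hp hq; set a := z.1 - z'.1; set b := z.2 - z'.2 => hp hq; nia.
  by exists (2 * q - 3 * p); move: hp hq; set a := z.1 - z'.1; set b := z.2 - z'.2 => hp hq; nia.
case/andP => /eqP/dvdz_mod0P/dvdzP [p hp] /eqP/dvdz_mod0P/dvdzP [q hq].
apply/andP; split; apply/eqP/dvdz_mod0P/dvdzP.
  by exists (2 * p + q); rewrite hp hq; ring.
by exists (3 * p + 2 * q); rewrite hp hq; ring.
Qed.

Lemma Wm_neg u y : (u < 12)%N -> mapp (Wm (11 - u)) y = (- (mapp (Wm u) y).1, - (mapp (Wm u) y).2).
Proof.
case: y => y1 y2.
do 12! (case: u => [|u]; first by move=> _; rewrite /mapp /=; congr pair; ring).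
by [].
Qed.

Lemma inner_prod z z' :
  \sum_(x : 'I_(NN k) * 'I_(KK k)) E (Bf z (bx x)) * E (Bf z' (bx x)) =
  ((NN k * KK k)%:R / 2) * ((condB (z.1 + z'.1, z.2 + z'.2))%:R + (condB (z.1 - z'.1, z.2 - z'.2))%:R).
Proof.
have h2 : (2 : R) != 0 by rewrite pnatr_eq0.
have e : forall x : 'I_(NN k) * 'I_(KK k), E (Bf z (bx x)) * E (Bf z' (bx x)) =
   (E (Bf (z.1 + z'.1, z.2 + z'.2) (bx x)) + E (Bf (z.1 - z'.1, z.2 - z'.2) (bx x))) / 2.
  move=> x; rewrite (_ : Bf (z.1 + z'.1, z.2 + z'.2) (bx x) = Bf z (bx x) + Bf z' (bx x)); last first.
    by rewrite /Bf /=; ring.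
  rewrite (_ : Bf (z.1 - z'.1, z.2 - z'.2) (bx x) = Bf z (bx x) - Bf z' (bx x)); last first.
    by rewrite /Bf /=; ring.
  by rewrite -E_prod; field.
rewrite (eq_bigr _ (fun x _ => e x)) -mulr_suml big_split /=.
rewrite /Bf /= !boxE /condB /=.
by case: ifP; case: ifP => _ _ /=; field.
Qed.

Definition Uset : seq nat := [:: 0%N; 7%N; 8%N; 10%N; 2%N; 5%N].

Lemma Uset_lt u : u \in Uset -> (u < 12)%N.
Proof. by move: u; apply/allP. Qed.

Lemma ind_minus u u' (l m : Pk k) : u \in Uset -> u' \in Uset ->
  condB ((mapp (Wm u) (hat l)).1 - (mapp (Wm u') (hat m)).1, (mapp (Wm u) (hat l)).2 - (mapp (Wm u') (hat m)).2)
  = (u == u') && (l == m).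
Proof.
move=> hu hu'; have lu := Uset_lt hu; have lu' := Uset_lt hu'.
rewrite condB_congT; apply/idP/idP.
  move/congbP => h.
  have [e1 e2] := @inj_hat k (Ordinal lu) (Ordinal lu') l m h.
  by case: e1 => ->; rewrite e2 !eqxx.
case/andP => /eqP <- /eqP <-; apply/congbP; exists 0, 0.
by case: (mapp _ _) => a b /=; rewrite !mulr0 !addr0.
Qed.

Lemma ind_plus u u' (l m : Pk k) : u \in Uset -> u' \in Uset ->
  condB ((mapp (Wm u) (hat l)).1 + (mapp (Wm u') (hat m)).1, (mapp (Wm u) (hat l)).2 + (mapp (Wm u') (hat m)).2)
  = false.
Proof.
move=> hu hu'; have lu := Uset_lt hu; have lu' := Uset_lt hu'.
have l11 : (11 - u' < 12)%N by lia.
apply/negbTE/negP.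
have e : ((mapp (Wm u) (hat l)).1 + (mapp (Wm u') (hat m)).1, (mapp (Wm u) (hat l)).2 + (mapp (Wm u') (hat m)).2)
  = ((mapp (Wm u) (hat l)).1 - (mapp (Wm (11 - u')) (hat m)).1, (mapp (Wm u) (hat l)).2 - (mapp (Wm (11 - u')) (hat m)).2).
  by rewrite (Wm_neg _ lu') /= !opprK.
rewrite e condB_congT => /congbP h.
have [e1 _] := @inj_hat k (Ordinal lu) (Ordinal l11) l m h.
case: e1 => e1.
have : all (fun u : nat => all (fun u' : nat => u != (11 - u')%N) Uset) Uset by [].
by move/allP => /(_ _ hu)/allP/(_ _ hu'); rewrite e1 eqxx.
Qed.

Lemma orth_box (l m : Pk k) :
  \sum_(x : 'I_(NN k) * 'I_(KK k)) Br R k (hat l) (bx x) * Br R k (hat m) (bx x)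
  = if l == m then (3 * NN k * KK k)%:R else 0.
Proof.
have e1 : forall x : 'I_(NN k) * 'I_(KK k), Br R k (hat l) (bx x) * Br R k (hat m) (bx x) =
   \sum_(t <- BrU) \sum_(t' <- BrU) (t.1 * t'.1)%:~R *
     (E (Bf (mapp (Wm t.2) (hat l)) (bx x)) * E (Bf (mapp (Wm t'.2) (hat m)) (bx x))).
  move=> x; rewrite !BrE big_distrlr /=; apply: eq_bigr => t _; apply: eq_bigr => t' _.
  by rewrite rmorphM /=; ring.
rewrite (eq_bigr _ (fun x _ => e1 x)) exchange_big /=.
under eq_bigr => t _ do rewrite exchange_big /=.
have e2 : forall t t', t \in BrU -> t' \in BrU ->
   \sum_(x : 'I_(NN k) * 'I_(KK k)) (t.1 * t'.1)%:~R *
     (E (Bf (mapp (Wm t.2) (hat l)) (bx x)) * E (Bf (mapp (Wm t'.2) (hat m)) (bx x)))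
   = (t.1 * t'.1)%:~R * (((NN k * KK k)%:R / 2) * ((t.2 == t'.2) && (l == m))%:R).
  move=> t t' ht ht'.
  have hu : t.2 \in Uset by rewrite -[Uset]/(map snd BrU) map_f.
  have hu' : t'.2 \in Uset by rewrite -[Uset]/(map snd BrU) map_f.
  rewrite -mulr_sumr inner_prod ind_plus // ind_minus // add0r //.
transitivity (\sum_(t <- BrU) \sum_(t' <- BrU)
   (t.1 * t'.1)%:~R * (((NN k * KK k)%:R / 2) * ((t.2 == t'.2) && (l == m))%:R) : R).
  apply: eq_big_seq => t ht; apply: eq_big_seq => t' ht'; exact: e2.
have h2 : (2 : R) != 0 by rewrite pnatr_eq0.
case: eqP => _; rewrite /BrU !big_cons !big_nil /= ?andbT ?andbF; rewrite ?natrM. all: by field.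
Qed.

End Orth.

Section LHS.
Variable R : realType.
Variable k : nat.
Local Notation E := (Ecos R k).

Definition c0 : R := (-2) / ((k + 4)%:R * Num.sqrt 3).

Lemma Sent_Br l1 l2 m1 m2 :
  Sent R k l1 l2 m1 m2 = c0 * Br R k ((l1.+1)%:Z, (l2.+1)%:Z) ((m1.+1)%:Z, (m2.+1)%:Z).
Proof.
rewrite /Sent /c0 /Br /sumE !big_cons big_nil /=; congr (_ * _).
have ea : ((l1 + l2 + 2)%N : int) = (l1.+1 : int) + (l2.+1 : int) by lia.
have eb : ((m1 + m2 + 2)%N : int) = (m1.+1 : int) + (m2.+1 : int) by lia.
have el : ((l2 + 1)%N : int) = (l2.+1 : int) by lia.
have em : ((m2 + 1)%N : int) = (m2.+1 : int) by lia.
rewrite ea eb el em /ev /=.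
set y1 := (l1.+1 : int); set y2 := (l2.+1 : int); set x1 := (m1.+1 : int); set x2 := (m2.+1 : int).
have key : forall a1 a2 a3 a4 a5 a6 b1 b2 b3 b4 b5 b6 : int,
  a1 = b1 -> a2 = b2 -> a3 = b3 -> a4 = b4 -> a5 = b5 -> a6 = b6 ->
  E a1 + E a2 + E a3 - E a4 - E a5 - E a6 =
  1%:~R * E b1 + (1%:~R * E b2 + (1%:~R * E b3 + ((-1)%:~R * E b4 + ((-1)%:~R * E b5 + ((-1)%:~R * E b6 + 0))))).
  move=> a1 a2 a3 a4 a5 a6 b1 b2 b3 b4 b5 b6 -> -> -> -> -> ->.
  rewrite rmorphN1 /=; ring.
apply: key; ring.
Qed.

Lemma S_Br (l m : Pk k) : S R k l m = c0 * Br R k (hat l) (hat m).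
Proof. exact: Sent_Br. Qed.

Lemma S_sym (l m : Pk k) : S R k l m = S R k m l.
Proof. by rewrite !S_Br Br_sym. Qed.

Lemma detW2 i : (i < 12)%N -> ((detM (Wm i))%:~R : R) * (detM (Wm i))%:~R = 1.
Proof.
rewrite -rmorphM; move=> hi.
have -> : detM (Wm i) * detM (Wm i) = 1.
  by do 12! (case: i hi => [|i] hi; first by []).
by [].
Qed.

Lemma unfold_Br2 (l m : Pk k) :
  \sum_(s : Pk k) Br R k (hat l) (hat s) * Br R k (hat m) (hat s) =
  (12 : R)^-1 * \sum_(x : 'I_(NN k) * 'I_(KK k)) Br R k (hat l) (bx x) * Br R k (hat m) (bx x).
Proof.
rewrite (unfold (f := fun x => Br R k (hat l) x * Br R k (hat m) x)).
- by rewrite mulrA mulVf ?mul1r // pnatr_eq0.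
- by move=> x u v; rewrite !Br_per.
- by move=> i x hi; rewrite !Br_W // mulrACA detW2 // mul1r.
- by move=> x h; rewrite h mul0r.
Qed.

Lemma sqrt3 : Num.sqrt (3 : R) ^+ 2 = 3.
Proof. by rewrite sqr_sqrtr // ler0n. Qed.

Lemma S_orth (l m : Pk k) : \sum_(s : Pk k) S R k l s * S R k s m = (l == m)%:R.
Proof.
have e : forall s : Pk k, S R k l s * S R k s m = c0 ^+ 2 * (Br R k (hat l) (hat s) * Br R k (hat m) (hat s)).
  by move=> s; rewrite (S_sym s m) !S_Br; ring.
rewrite (eq_bigr _ (fun s _ => e s)) -mulr_sumr unfold_Br2 orth_box.
case: eqP => _; last by rewrite !mulr0.
rewrite /c0 /NN /KK !natrM.
have h3 : Num.sqrt (3 : R) != 0 by rewrite sqrtr_eq0 -ltNge ltr0n.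
have hk : ((k + 4)%:R : R) != 0 by rewrite pnatr_eq0 addn4.
rewrite /= expr_div_n exprMn sqrt3.
by field; rewrite -?natrD ?pnatr_eq0 ?addn4.
Qed.

Definition Sv (v : Pk k -> R) (l : Pk k) : R := \sum_(s : Pk k) S R k l s * v s.
Definition dd (r1 r2 : nat) (s : Pk k) : R :=
  Sent R k r1 r2 (val s).1 (val s).2 / Sent R k 0 0 (val s).1 (val s).2.

Lemma Sv_Sv v l : Sv (Sv v) l = v l.
Proof.
transitivity (\sum_(t : Pk k) (\sum_(s : Pk k) S R k l s * S R k s t) * v t).
  rewrite /Sv; under eq_bigr => s _ do rewrite mulr_sumr.
  rewrite exchange_big /=; apply: eq_bigr => t _; rewrite mulr_suml; apply: eq_bigr => s _.
  by rewrite mulrA.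
under eq_bigr => t _ do rewrite S_orth.
rewrite (bigD1 l) //= eqxx mul1r big1 ?addr0 // => t /negbTE; rewrite eq_sym => ->.
by rewrite mul0r.
Qed.

Lemma mapply_A r1 r2 v l :
  mapply R k (Amat R k r1 r2) v l = Sv (fun s => dd r1 r2 s * Sv v s) l.
Proof.
rewrite /mapply /Amat /Sv.
under eq_bigr => mu _ do rewrite mulr_suml.
rewrite exchange_big /=; apply: eq_bigr => s _.
rewrite mulr_sumr mulr_sumr; apply: eq_bigr => mu _.
rewrite (S_sym mu s) /dd; ring.
Qed.

Lemma iter_A r1 r2 n (v g : Pk k -> R) : (forall l, v l = Sv g l) ->
  forall l, iter n (mapply R k (Amat R k r1 r2)) v l = Sv (fun s => dd r1 r2 s ^+ n * g s) l.
Proof.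
move=> hv; elim: n => [|n IH] l /=.
  by rewrite hv; apply: eq_bigr => s _; rewrite expr0 mul1r.
have -> : mapply R k (Amat R k r1 r2) (iter n (mapply R k (Amat R k r1 r2)) v) l =
    mapply R k (Amat R k r1 r2) (Sv (fun s => dd r1 r2 s ^+ n * g s)) l.
  by apply: eq_bigr => mu _; rewrite IH.
rewrite mapply_A; apply: eq_bigr => s _; rewrite Sv_Sv exprS; ring.
Qed.

Lemma moment_S m n :
  moment k m n = \sum_(s : Pk k) S R k (Pk0 k) s * (dd 1 0 s ^+ m * (dd 0 1 s ^+ n * S R k s (Pk0 k))).
Proof.
rewrite /moment.
have h1 : forall l, iter n (mapply R k (A2 R k)) (e0 R k) l =
    Sv (fun s => dd 0 1 s ^+ n * S R k s (Pk0 k)) l.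
  by apply: iter_A => l; rewrite /Sv S_orth /e0; case: eqP.
by rewrite /A1 (iter_A 1 0 m h1).
Qed.

End LHS.

Section Ordz.
Variable n : nat.
Hypothesis hn : (0 < n)%N.

Lemma ordz_lt (a : int) : (`|(a %% n%:Z)%Z| < n)%N.
Proof.
have h0 : 0 <= (a %% n%:Z)%Z by rewrite modz_ge0 //; lia.
have h1 : (a %% n%:Z)%Z < n%:Z by rewrite ltz_pmod //; lia.
move: h0 h1; set r := (a %% n%:Z)%Z; lia.
Qed.

Definition ordz (a : int) : 'I_n := Ordinal (ordz_lt a).

Lemma ordzE a : ((ordz a : nat) : int) = (a %% n%:Z)%Z.
Proof.
rewrite /ordz /= gez0_abs // modz_ge0 //; lia.
Qed.

Lemma modz_eqP (a b : int) c : 0 <= b < n%:Z -> a = b + n%:Z * c -> (a %% n%:Z)%Z = b.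
Proof.
move=> hb ->; rewrite mulrC addrC.
have := modzMDl c b n%:Z; rewrite (@modz_small b) // => ->.
Qed.

Lemma ordz_eq (a : int) (x : 'I_n) c : a = (x : nat)%:Z + n%:Z * c -> ordz a = x.
Proof.
move=> h; apply: ord_inj; apply/eqP; rewrite -eqz_nat ordzE; apply/eqP.
apply: (modz_eqP (c := c)) => //; have := ltn_ord x; lia.
Qed.

End Ordz.

Lemma dvdz_natE (d m : nat) : (d%:Z %| m%:Z)%Z = (d %| m)%N.
Proof. by rewrite dvdzE. Qed.

Section Reindex.
Variable k : nat.
Local Notation N := (NN k).
Local Notation K := (Kz k).

Definition hq (x : 'I_(NN k) * 'I_(KK k)) : 'I_(NN k) * 'I_(NN k) :=
  (ordz (NNpos k) (2 * (x.1 : nat)%:Z + 3 * (x.2 : nat)%:Z), ordz (NNpos k) ((x.1 : nat)%:Z + 3 * (x.2 : nat)%:Z)).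
Definition hx (q : 'I_(NN k) * 'I_(NN k)) : 'I_(NN k) * 'I_(KK k) :=
  (ordz (NNpos k) ((q.1 : nat)%:Z - (q.2 : nat)%:Z),
   ordz (KKpos k) ((2 * (q.2 : nat)%:Z - (q.1 : nat)%:Z) %/ 3)%Z).

Lemma NzE : (N%:Z : int) = 3 * K. Proof. by rewrite /NN PoszM. Qed.

Lemma ordz_mod n (hn : (0 < n)%N) (a : int) : exists c, ((ordz hn a : nat) : int) = a + n%:Z * c.
Proof.
exists (- (a %/ n%:Z)%Z); rewrite ordzE {2}(divz_eq a n%:Z); ring.
Qed.

Lemma hq_mod x : exists a b,
  (((hq x).1 : nat) : int) = 2 * (x.1 : nat)%:Z + 3 * (x.2 : nat)%:Z + N%:Z * a /\
  (((hq x).2 : nat) : int) = (x.1 : nat)%:Z + 3 * (x.2 : nat)%:Z + N%:Z * b.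
Proof.
have [a ha] := ordz_mod (NNpos k) (2 * (x.1 : nat)%:Z + 3 * (x.2 : nat)%:Z).
have [b hb] := ordz_mod (NNpos k) ((x.1 : nat)%:Z + 3 * (x.2 : nat)%:Z).
by exists a, b.
Qed.

Lemma hxK x : hx (hq x) = x.
Proof.
have [a [b [ha hb]]] := hq_mod x.
case: x ha hb => x1 x2 ha hb; rewrite /hx /=; congr pair.
  apply: (@ordz_eq _ _ _ _ (a - b)); rewrite ha hb /=; ring.
apply: (@ordz_eq _ _ _ _ (2 * b - a)).
rewrite ha hb /= (_ : 2 * _ - _ = 3 * ((x2 : nat)%:Z + K * (2 * b - a))); last by rewrite NzE; ring.
by rewrite mulKz.
Qed.

Lemma hq_pred x : FkW_pred k (hq x).
Proof.
have [a [b [ha hb]]] := hq_mod x.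
rewrite /FkW_pred; apply/eqP; apply/eqP.
rewrite -[(_ %% 3 == 0)%N]/(3 %| (hq x).1 + (hq x).2)%N -(dvdz_natE 3) PoszD ha hb.
apply/dvdzP; exists ((x.1 : nat)%:Z + 2 * (x.2 : nat)%:Z + K * (a + b)); rewrite NzE; ring.
Qed.

Lemma hqK q : FkW_pred k q -> hq (hx q) = q.
Proof.
rewrite /FkW_pred => hP.
have hd : (3 %| (q.1 : nat)%:Z + (q.2 : nat)%:Z)%Z by rewrite -PoszD (dvdz_natE 3).
case/dvdzP: hd => f hf.
have he : ((2 * (q.2 : nat)%:Z - (q.1 : nat)%:Z) %/ 3)%Z = 2 * f - (q.1 : nat)%:Z.
  by rewrite (_ : _ - _ = 3 * (2 * f - (q.1 : nat)%:Z)) ?mulKz //; lia.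
have [c1 h1] := ordz_mod (NNpos k) ((q.1 : nat)%:Z - (q.2 : nat)%:Z).
have [c2 h2] := ordz_mod (KKpos k) ((2 * (q.2 : nat)%:Z - (q.1 : nat)%:Z) %/ 3)%Z.
rewrite he in h2.
case: q hP hf he h1 h2 => q1 q2 /= hP hf he h1 h2.
rewrite /hq /hx /= he; congr pair.
  apply: (@ordz_eq _ _ _ _ (2 * c1 + c2)); rewrite h1 h2 NzE /=.
  have e2 : ((q2 : nat) : int) = f * 3 - (q1 : nat)%:Z by rewrite -hf; ring.
  rewrite e2 /Kz /KK; ring.
apply: (@ordz_eq _ _ _ _ (c1 + c2)); rewrite h1 h2 NzE /=.
have e2 : ((q2 : nat) : int) = f * 3 - (q1 : nat)%:Z by rewrite -hf; ring.
rewrite e2 /Kz /KK; ring.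
Qed.

End Reindex.

Definition JLx : seq term := [:: (1, lin 5 9); (1, lin (-1) (-6)); (1, lin 4 3);
   (-1, lin 4 9); (-1, lin 5 6); (-1, lin 1 (-3))].
Lemma chk_J : chkL (JLx ++ scaleL (-1) (mapL (specf (1, 1)) BrL)).
Proof. vm_compute. reflexivity. Qed.

Lemma ev_lin a b y x : ev (lin a b) y x = a * x.1 + b * x.2.
Proof. rewrite /ev /lin /=; ring. Qed.

Section Points.
Variable R : realType.
Variable k : nat.
Local Notation E := (Ecos R k).
Local Notation N := (NN k).

Lemma E_congr a b : a = b -> E a = E b. Proof. by move=> ->. Qed.

Lemma cosE (z : int) (r : R) : r = z%:~R / N%:R -> cos (2 * pi * r) = E z.
Proof.
move=> ->; rewrite /Ecos xiE; congr cos; rewrite mulr_natl; ring.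
Qed.

Lemma Br11_J x : sumE R k JLx (0, 0) x = Br R k (1, 1) x.
Proof.
rewrite (sumE_eq _ _ _ _ chk_J); apply: sumE_map => f; by rewrite -ev_spec.
Qed.

Variables (q1 q2 : nat) (x1 x2 a b : int).
Hypothesis hq1 : q1%:Z = 2 * x1 + 3 * x2 + N%:Z * a.
Hypothesis hq2 : q2%:Z = x1 + 3 * x2 + N%:Z * b.
Local Notation t1 := ((q1%:R : R) / (3 * (k + 4))%:R).
Local Notation t2 := ((q2%:R : R) / (3 * (k + 4))%:R).

Lemma Eq (c1 c2 : int) (z : int) (r : R) : r = (c1 * q1%:Z + c2 * q2%:Z)%:~R / N%:R ->
  z = c1 * (2 * x1 + 3 * x2) + c2 * (x1 + 3 * x2) -> cos (2 * pi * r) = E z.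
Proof.
move=> hr hz; rewrite (cosE hr) hq1 hq2 hz.
rewrite (_ : _ + _ = c1 * (2 * x1 + 3 * x2) + c2 * (x1 + 3 * x2) + N%:Z * (c1 * a + c2 * b)); last by ring.
exact: E_per.
Qed.

Lemma rE (c1 c2 : int) : (c1%:~R * t1 + c2%:~R * t2 : R) = (c1 * q1%:Z + c2 * q2%:Z)%:~R / N%:R.
Proof. rewrite intrD !intrM !pmulrn /NN /KK; ring. Qed.

Lemma chi1_pt : chi1 t1 t2 = sumE R k Chi1L (0, 0) (x1, x2).
Proof.
rewrite /chi1 /Chi1L /sumE !big_cons big_nil !ev_lin /=.
rewrite (@Eq 1 0 (2 * x1 + 3 * x2)); [|by rewrite -rE; ring|by ring].
rewrite (@Eq 0 1 (1 * x1 + 3 * x2)); [|by rewrite -rE; ring|by ring].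
rewrite (@Eq 1 (-1) (1 * x1 + 0 * x2)); [|by rewrite -rE rmorphN1; ring|by ring].
rewrite (_ : E (0 * x1 + 0 * x2) = 1); last by rewrite !mul0r addr0 E0.
ring.
Qed.

Lemma chi2_pt : chi2 t1 t2 = sumE R k Chi2L (0, 0) (x1, x2).
Proof.
rewrite /chi2 chi1_pt /Chi2L sumE_cat /sumE !big_cons big_nil !ev_lin /=.
rewrite (@Eq 1 1 (3 * x1 + 6 * x2)); [|by rewrite -rE; ring|by ring].
rewrite (@Eq 2 (-1) (3 * x1 + 3 * x2)); [|by rewrite -rE rmorphN1; ring|by ring].
rewrite (@Eq 1 (-2) (0 * x1 + -3 * x2)); [|by rewrite -rE rmorphN; ring|by ring].
rewrite (_ : E (0 * x1 + 0 * x2) = 1); last by rewrite !mul0r addr0 E0.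
ring.
Qed.

Lemma J_pt : J t1 t2 = 8 * pi ^+ 2 * Br R k (1, 1) (x1, x2).
Proof.
rewrite /J -Br11_J /JLx /sumE !big_cons big_nil !ev_lin /=.
rewrite (@Eq 2 1 (5 * x1 + 9 * x2)); [|by rewrite -rE; ring|by ring].
rewrite (@Eq 1 (-3) (-1 * x1 + -6 * x2)); [|by rewrite -rE rmorphN; ring|by ring].
rewrite (@Eq 3 (-2) (4 * x1 + 3 * x2)); [|by rewrite -rE rmorphN; ring|by ring].
rewrite (@Eq 1 2 (4 * x1 + 9 * x2)); [|by rewrite -rE; ring|by ring].
rewrite (@Eq 3 (-1) (5 * x1 + 6 * x2)); [|by rewrite -rE rmorphN1; ring|by ring].
rewrite (@Eq 2 (-3) (1 * x1 + -3 * x2)); [|by rewrite -rE rmorphN; ring|by ring].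
ring.
Qed.

End Points.

Section Final.
Variable R : realType.
Variables k m n : nat.

Definition gfun (x : int * int) : R :=
  chi1x R k x ^+ m * chi2x R k x ^+ n * Br R k (1, 1) x ^+ 2.

Lemma LHS_eq : moment k m n = c0 R k ^+ 2 * \sum_(s : Pk k) gfun (hat s).
Proof.
rewrite moment_S mulr_sumr; apply: eq_bigr => s _.
have h0 : S R k (Pk0 k) s = c0 R k * Br R k (1, 1) (hat s) by rewrite S_Br.
have h0' : S R k s (Pk0 k) = c0 R k * Br R k (1, 1) (hat s) by rewrite S_sym S_Br.
have hd1 : dd R 1 0 s = (c0 R k * (chi1x R k (hat s) * Br R k (1, 1) (hat s))) /
                          (c0 R k * Br R k (1, 1) (hat s)).
  by rewrite /dd !Sent_Br -chi1_id.
have hd2 : dd R 0 1 s = (c0 R k * (chi2x R k (hat s) * Br R k (1, 1) (hat s))) /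
                          (c0 R k * Br R k (1, 1) (hat s)).
  by rewrite /dd !Sent_Br -chi2_id.
have [hz|hB] := eqVneq (Br R k (1, 1) (hat s)) 0.
  by rewrite h0 /gfun hz; ring.
have hc : c0 R k != 0.
  rewrite /c0 mulf_neq0 // ?oppr_eq0 ?pnatr_eq0 // invr_eq0 mulf_neq0 ?pnatr_eq0 ?addn4 //.
  by rewrite sqrtr_eq0 -ltNge ltr0n.
have hd1' : dd R 1 0 s = chi1x R k (hat s) by rewrite hd1; field; rewrite hc hB.
have hd2' : dd R 0 1 s = chi2x R k (hat s) by rewrite hd2; field; rewrite hc hB.
rewrite h0 h0' hd1' hd2' /gfun; ring.
Qed.

Lemma gfun_unfold :
  \sum_(x : 'I_(NN k) * 'I_(KK k)) gfun (bx x) = 12 * \sum_(s : Pk k) gfun (hat s).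
Proof.
apply: unfold.
- by move=> x u v; rewrite /gfun chi1_per chi2_per Br_per.
- move=> i x hi; rewrite /gfun chi1_W // chi2_W // Br_W //.
  by rewrite exprMn expr2 detW2 // mul1r.
- by move=> x h; rewrite /gfun h expr0n /= mulr0.
Qed.

Lemma card_FkW : #|[set q : 'I_(3 * (k + 4)) * 'I_(3 * (k + 4)) | FkW_pred k q]| = (NN k * KK k)%N.
Proof.
rewrite -sum1_card (eq_bigl (fun q => FkW_pred k q)); last by move=> q; rewrite inE.
rewrite (reindex_onto (@hq k) (@hx k)); last by move=> q; exact: hqK.
rewrite (eq_bigl xpredT); last by move=> x; rewrite hq_pred hxK eqxx.
by rewrite sum1_card card_prod !card_ord.
Qed.

Lemma RHS_eq : (192 * pi ^+ 4)^-1 *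
  dk_integral k (fun t1 t2 : R => chi1 t1 t2 ^+ m * chi2 t1 t2 ^+ n * J t1 t2 ^+ 2) =
  c0 R k ^+ 2 * \sum_(s : Pk k) gfun (hat s).
Proof.
rewrite /dk_integral card_FkW.
rewrite (reindex_onto (@hq k) (@hx k)); last by move=> q; exact: hqK.
rewrite (eq_bigl xpredT); last by move=> x; rewrite hq_pred hxK eqxx.
have e : forall x : 'I_(NN k) * 'I_(KK k),
   chi1 (((@hq k x).1 : nat)%:R / (3 * (k + 4))%:R) (((@hq k x).2 : nat)%:R / (3 * (k + 4))%:R) ^+ m *
   chi2 (((@hq k x).1 : nat)%:R / (3 * (k + 4))%:R) (((@hq k x).2 : nat)%:R / (3 * (k + 4))%:R) ^+ n *
   J (((@hq k x).1 : nat)%:R / (3 * (k + 4))%:R) (((@hq k x).2 : nat)%:R / (3 * (k + 4))%:R) ^+ 2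
   = (8 * pi ^+ 2) ^+ 2 * gfun (bx x).
  move=> x; have [a [b [ha hb]]] := hq_mod x.
  rewrite (chi1_pt R ha hb) (chi2_pt R ha hb) (J_pt R ha hb) /gfun /chi1x /chi2x /bx.
  by rewrite exprMn; ring.
rewrite (eq_bigr _ (fun x _ => e x)) -mulr_sumr gfun_unfold.
have hpi : pi != 0 :> R by rewrite gt_eqF // pi_gt0.
have hk : ((k + 4)%:R : R) != 0 by rewrite pnatr_eq0 addn4.
have h3 : Num.sqrt (3 : R) != 0 by rewrite sqrtr_eq0 -ltNge ltr0n.
rewrite /c0 /NN /KK !natrM expr_div_n !exprMn sqrt3.
move: hpi; move: (pi : R) => p hp.
by field; rewrite -?natrD ?pnatr_eq0 ?addn4 ?hp.
Qed.

End Final.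

Unset Implicit Arguments.

Theorem mainTheorem3 (R : realType) (k m n : nat) :
  @moment R k m n =
  (192 * pi ^+ 4)^-1 *
  dk_integral k (fun t1 t2 : R => chi1 t1 t2 ^+ m * chi2 t1 t2 ^+ n * J t1 t2 ^+ 2).
Proof. by rewrite LHS_eq RHS_eq. Qed.
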